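(* Let $\lambda\in(0,r^\alpha)$. For a finite set $E\subset K$ with $\#E\ge2$, if $R(\xi,\eta)>0$ for all distinct $\xi,\eta\in E$, then $R(\xi,E\setminus\{\xi\})>0$ for all $\xi\in E$.
   Context: Let $\{S_i\}_{i=1}^N$ ($N\ge2$) be contractive similitudes of $\mathbb R^d$ with ratios $r_i\in(0,1)$ satisfying the open set condition; $K$ the self-similar set, $\alpha$ its Hausdorff dimension, $r=\min r_i$. $\Sigma^*$ finite words with empty word $\vartheta$, $S_{\mathbf x}$, $r_{\mathbf x}$ compositions/products. $\mathcal J_0=\{\vartheta\}$, $\mathcal J_n=\{i_1\cdots i_k:r_{i_1\cdots i_k}\le r^n<r_{i_1\cdots i_{k-1}}\}$, $X_n=\bigcup_{k\le n}\mathcal J_k$, $|\mathbf x|=n$ on $\mathcal J_n$, parent $\mathbf x^-$ the prefix in $\mathcal J_{n-1}$. Edges: $\{\mathbf x,\mathbf x^-\}$ and horizontal $\{\mathbf x,\mathbf y\}$ ($\mathbf x\ne\mathbf y\in\mathcal J_n$, $\inf_{\xi,\eta\in K}|S_{\mathbf x}(\xi)-S_{\mathbf y}(\eta)|\le\gamma r^n$). Conductances of the $\lambda$-natural random walk: $c(\mathbf x,\mathbf x^-)=r_{\mathbf x}^\alpha\lambda^{-|\mathbf x|}$, $c(\mathbf x,\mathbf y)=r^{\alpha|\mathbf x|}\lambda^{-|\mathbf x|}$ on horizontal edges, zero otherwise; $\mathcal E_{X_n}[f]=\frac12\sum_{\mathbf x,\mathbf y\in X_n}c(\mathbf x,\mathbf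 y)(f(\mathbf x)-f(\mathbf y))^2$. Effective resistance $R_{X_n}(A,B)=(\min\{\mathcal E_{X_n}[f]:f=1$ on $A$, $0$ on $B\})^{-1}$, $0$ if $A\cap B\ne\emptyset$. For a $\kappa$-sequence (maps $\kappa_n:K\to\mathcal J_n$ with $\kappa_n(\xi)$ a prefix of $\kappa_{n+1}(\xi)$ and $\xi\in S_{\kappa_n(\xi)}(K)$ for all $n$), the limiting resistance of closed $\Phi,\Psi\subset K$ is $R(\Phi,\Psi)=\lim_nR_{X_n}(\kappa_n(\Phi),\kappa_n(\Psi))$ (exists, independent of the $\kappa$-sequence); points are identified with singletons. *)

(* Defs.v *)
From HB Require Import structures.
From mathcomp Require Import all_boot all_order all_algebra.
From mathcomp Require Import all_classical all_reals all_analysis.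
Set Implicit Arguments. Unset Strict Implicit. Unset Printing Implicit Defensive.
Import Order.TTheory GRing.Theory Num.Theory.
Import numFieldNormedType.Exports.
Local Open Scope classical_set_scope.
Local Open Scope ring_scope.

Definition eucl_dist (R : realType) (d : nat) (x y : 'rV[R]_d) : R :=
  Num.sqrt (\sum_(j < d) (x ord0 j - y ord0 j) ^+ 2).

(* Euclidean diameter of a set (meant for bounded sets; 0 for the empty set). *)
Definition ediam (R : realType) (d : nat) (B : set 'rV[R]_d) : R :=
  sup ([set eucl_dist x y | x in B & y in B] `|` [set 0]).

Definition hausdorff_delta (R : realType) (d : nat) (s delta : R)
    (A : set 'rV[R]_d) : \bar R :=
  ereal_inf [set (\sum_(0 <= k <oo) ((ediam (F k)) `^ s)%:E)%E
            | F in [set F : nat -> set 'rV[R]_d |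
                     A `<=` \bigcup_k F k /\
                     (forall k x y, F k x -> F k y -> eucl_dist x y <= delta)]].

Definition hausdorff_measure (R : realType) (d : nat) (s : R)
    (A : set 'rV[R]_d) : \bar R :=
  ereal_sup [set hausdorff_delta s delta A | delta in [set delta : R | 0 < delta]].

Definition hausdorff_dim (R : realType) (d : nat) (A : set 'rV[R]_d) : \bar R :=
  ereal_inf [set s%:E | s in [set s : R | 0 <= s /\ hausdorff_measure s A = 0%E]].

Definition OSC (R : realType) (d N : nat) (S : 'I_N -> 'rV[R]_d -> 'rV[R]_d) : Prop :=
  exists U : set 'rV[R]_d, open U /\ U !=set0 /\
    (forall i, S i @` U `<=` U) /\
    (forall i j, i != j -> S i @` U `&` S j @` U = set0).

Definition word (N : nat) := seq 'I_N.

Definition rw (R : realType) (N : nat) (r : 'I_N -> R) (w : word N) : R :=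
  \prod_(i <- w) r i.

Definition Sw (R : realType) (d N : nat) (S : 'I_N -> 'rV[R]_d -> 'rV[R]_d)
    (w : word N) : 'rV[R]_d -> 'rV[R]_d :=
  foldr (fun i f => S i \o f) id w.

Definition rmin (R : realType) (N : nat) (r : 'I_N -> R) : R :=
  \big[Num.min/1]_(i < N) r i.

Definition inJ (R : realType) (N : nat) (r : 'I_N -> R) (n : nat) (w : word N) : Prop :=
  if n is 0 then w = [::]
  else w <> [::] /\ rw r w <= rmin r ^+ n /\ rmin r ^+ n < rw r (take (size w).-1 w).

(* |w| : the (unique) n with w \in J_n *)
Definition level (R : realType) (N : nat) (r : 'I_N -> R) (w : word N) : nat :=
  xget 0%N [set n | inJ r n w].

Definition Xn (R : realType) (N : nat) (r : 'I_N -> R) (n : nat) : set (word N) :=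
  [set w | exists2 k, (k <= n)%N & inJ r k w].

Definition is_parent (R : realType) (N : nat) (r : 'I_N -> R) (y x : word N) : Prop :=
  exists2 n, (1 <= n)%N & [/\ inJ r n x, inJ r n.-1 y & prefix y x].

Definition gap (R : realType) (d N : nat) (S : 'I_N -> 'rV[R]_d -> 'rV[R]_d)
    (K : set 'rV[R]_d) (x y : word N) : R :=
  inf [set eucl_dist (Sw S x xi) (Sw S y eta) | xi in K & eta in K].

Definition horizontal (R : realType) (d N : nat) (S : 'I_N -> 'rV[R]_d -> 'rV[R]_d)
    (r : 'I_N -> R) (K : set 'rV[R]_d) (gamma : R) (x y : word N) : Prop :=
  exists n, [/\ inJ r n x, inJ r n y, x <> y & gap S K x y <= gamma * rmin r ^+ n].

Definition conductance (R : realType) (d N : nat) (S : 'I_N -> 'rV[R]_d -> 'rV[R]_d)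
    (r : 'I_N -> R) (K : set 'rV[R]_d) (alpha gamma lambda : R) (x y : word N) : R :=
  if `[< is_parent r y x >] then (rw r x) `^ alpha * lambda ^- (level r x)
  else if `[< is_parent r x y >] then (rw r y) `^ alpha * lambda ^- (level r y)
  else if `[< horizontal S r K gamma x y >] then
    (rmin r `^ alpha) ^+ (level r x) * lambda ^- (level r x)
  else 0.

Definition energy (R : realType) (d N : nat) (S : 'I_N -> 'rV[R]_d -> 'rV[R]_d)
    (r : 'I_N -> R) (K : set 'rV[R]_d) (alpha gamma lambda : R) (n : nat)
    (f : word N -> R) : R :=
  2^-1 * \sum_(x \in Xn r n) \sum_(y \in Xn r n)
     conductance S r K alpha gamma lambda x y * (f x - f y) ^+ 2.

Definition eff_res (R : realType) (d N : nat) (S : 'I_N -> 'rV[R]_d -> 'rV[R]_d)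
    (r : 'I_N -> R) (K : set 'rV[R]_d) (alpha gamma lambda : R) (n : nat)
    (A B : set (word N)) : R :=
  if `[< A `&` B !=set0 >] then 0
  else (inf [set energy S r K alpha gamma lambda n f
            | f in [set f : word N -> R |
                    (forall x, A x -> f x = 1) /\ (forall x, B x -> f x = 0)]])^-1.

Definition kappa_seq (R : realType) (d N : nat) (S : 'I_N -> 'rV[R]_d -> 'rV[R]_d)
    (r : 'I_N -> R) (K : set 'rV[R]_d) (kappa : nat -> 'rV[R]_d -> word N) : Prop :=
  forall xi, K xi -> forall n,
    [/\ inJ r n (kappa n xi), prefix (kappa n xi) (kappa n.+1 xi)
      & (Sw S (kappa n xi) @` K) xi].

Definition lim_res (R : realType) (d N : nat) (S : 'I_N -> 'rV[R]_d -> 'rV[R]_d)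
    (r : 'I_N -> R) (K : set 'rV[R]_d) (alpha gamma lambda : R)
    (kappa : nat -> 'rV[R]_d -> word N) (Phi Psi : set 'rV[R]_d) : R :=
  limn (fun n => eff_res S r K alpha gamma lambda n (kappa n @` Phi) (kappa n @` Psi)).

(* Main.v *)
Require Import Defs.
From HB Require Import structures.
From mathcomp Require Import all_boot all_order all_algebra.
From mathcomp Require Import all_classical all_reals all_analysis.
Import Order.TTheory GRing.Theory Num.Theory.
Import numFieldNormedType.Exports.
Local Open Scope classical_set_scope.
Local Open Scope ring_scope.
Set Implicit Arguments. Unset Strict Implicit.

Lemma words_fin (N L : nat) : finite_set [set w : word N | (size w <= L)%N].
Proof.
elim: L => [|L IH].
  apply: (sub_finite_set _ (finite_set1 ([::] : word N))).
  by move=> [|? ?] //=.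
apply: (sub_finite_set (B := [set [::] : word N] `|`
   ((fun p : 'I_N * word N => p.1 :: p.2) @` (setT `*` [set w : word N | (size w <= L)%N])))).
  move=> [|i w] /= h; first by left.
  by right; exists (i, w).
rewrite finite_setU; split; first exact: finite_set1.
apply: finite_image; apply: finite_setX => //; exact: finite_finset.
Qed.

From mathcomp Require Import ring lra.
Lemma sq_max0 (R : realType) (u v : R) : (Num.max 0 u - Num.max 0 v)^+2 <= (u - v)^+2.
Proof. have := sqr_ge0 (u - v); case: (leP 0 u) => h1; case: (leP 0 v) => h2; nra. Qed.
Lemma sq_min (R : realType) (a1 a2 b1 b2 : R) : (Num.min a1 a2 - Num.min b1 b2)^+2 <= (a1 - b1)^+2 + (a2 - b2)^+2.
Proof. have := sqr_ge0 (a1 - b1); have := sqr_ge0 (a2 - b2); case: (leP a1 a2) => h1; case: (leP b1 b2) => h2; [case: (leP 0 (a1 - b1)) | case: (leP 0 (a1 - b2)) | case: (leP 0 (a2 - b1)) | case: (leP 0 (a2 - b2))] => h0; nra. Qed.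
Lemma sq_min1 (R : realType) (u v : R) : (Num.min 1 u - Num.min 1 v)^+2 <= (u - v)^+2.
Proof. have := sqr_ge0 (u - v); case: (leP 1 u) => h1; case: (leP 1 v) => h2; nra. Qed.

Lemma quasi_cvg (R : realType) (u : nat -> R) (A s : R) (N0 : nat) :
  0 <= A -> 0 <= s -> s < 1 ->
  (forall n, (N0 <= n)%N -> 0 <= u n /\ u n.+1 <= u n + A * s ^+ n) ->
  cvgn u.
Proof.
move=> A0 s0 s1 H.
have s1p : 0 < 1 - s by lra.
pose w n := A / (1 - s) * s ^+ (n + N0)%N.
pose v n := u (n + N0)%N + w n.
have vdec : nonincreasing_seq v.
  apply/nonincreasing_seqP => n; rewrite /v /w addSn.
  have [_ h] := H (n + N0)%N (leq_addl _ _).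
  have e : A / (1 - s) * s ^+ (n + N0)%N = A * s ^+ (n + N0)%N + A / (1 - s) * s ^+ (n + N0).+1.
    rewrite exprS; field; lra.
  rewrite e addrA lerD2r; exact: h.
have vlb : has_lbound (range v).
  exists 0 => _ [n _ <-]; rewrite /v /w.
  have [h _] := H (n + N0)%N (leq_addl _ _).
  apply: addr_ge0 => //; apply: mulr_ge0; [apply: divr_ge0 => //; lra | exact: exprn_ge0].
have hv := nonincreasing_cvgn vdec vlb.
have hw : w @ \oo --> (A / (1 - s)) * 0.
  apply: cvgMl_tmp.
  have := @cvg_expr R s; rewrite ger0_norm // => /(_ s1).
  by rewrite -(cvg_shiftn N0).
have hu : (fun n => u (n + N0)%N) @ \oo --> (inf (v @` setT) - A / (1 - s) * 0).
  have -> : (fun n => u (n + N0)%N) = v - w.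
    by apply: funext => n; rewrite /v /= addrK.
  exact: cvgB.
apply/cvg_ex; exists (inf (v @` setT) - A / (1 - s) * 0).
by rewrite -(cvg_shiftn N0).
Qed.

Lemma limn_dvg (R : realType) (u : nat -> R) : ~ cvgn u -> limn u = 0.
Proof. move=> h. rewrite /lim /lim_in. rewrite getPN //. move=> l hl; apply: h. by apply/cvg_ex; exists l. Qed.

Lemma ev_seq (T : eqType) (s : seq T) (P : T -> nat -> Prop) :
  (forall b, b \in s -> exists N0, forall n, (N0 <= n)%N -> P b n) ->
  exists N0, forall n, (N0 <= n)%N -> forall b, b \in s -> P b n.
Proof.
elim: s => [|b s IH] H; first by exists 0%N.
have [N1 H1] := H b (mem_head _ _).
have [N2 H2] : exists N0, forall n, (N0 <= n)%N -> forall b, b \in s -> P b n.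
  by apply: IH => c cs; apply: H; rewrite inE cs orbT.
exists (maxn N1 N2) => n hn c; rewrite inE => /orP[/eqP -> | cs].
  by apply: H1; apply: leq_trans hn; exact: leq_maxl.
by apply: H2 => //; apply: leq_trans hn; exact: leq_maxr.
Qed.

Lemma ev_nat (P : nat -> Prop) : (\forall n \near \oo, P n) -> exists N0, forall n, (N0 <= n)%N -> P n.
Proof. by case=> N0 _ H; exists N0. Qed.

Section Main.
Variables (R : realType) (d N : nat) (S : 'I_N -> 'rV[R]_d -> 'rV[R]_d)
  (r : 'I_N -> R) (K : set 'rV[R]_d) (alpha gamma lambda : R).
Hypothesis hr : forall i, 0 < r i < 1.
Hypothesis hlam : 0 < lambda.
Hypothesis halpha : 0 <= alpha.

Let rmax := \big[Num.max/0]_(i < N) r i.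

Lemma rmax_ge i : r i <= rmax.
Proof. exact: le_bigmax. Qed.

Lemma rmax_ge0 : 0 <= rmax.
Proof. exact: bigmax_ge_id. Qed.

Lemma rmax_lt1 : rmax < 1.
Proof. apply: bigmax_lt => // i _; by case/andP: (hr i). Qed.

Lemma rmin_gt0 : 0 < rmin r.
Proof. apply: lt_bigmin => // i _; by case/andP: (hr i). Qed.

Lemma rmin_le i : rmin r <= r i.
Proof. exact: bigmin_le. Qed.

Lemma rmin_le1 : rmin r <= 1.
Proof. exact: bigmin_le_id. Qed.

Lemma rw_ge0 w : 0 <= rw r w.
Proof. rewrite /rw; apply: prodr_ge0 => i _; by case/andP: (hr i) => /ltW. Qed.

Lemma rw_le_rmax w : rw r w <= rmax ^+ size w.
Proof.
elim: w => [|i w IH]; first by rewrite /rw big_nil expr0.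
rewrite /rw big_cons /= exprS; apply: ler_pM => //.
  by case/andP: (hr i) => /ltW.
  exact: rw_ge0.
exact: rmax_ge.
Qed.

Lemma Xn_fin n : finite_set (Xn r n).
Proof.
have hpos : 0 < rmin r ^+ n by apply: exprn_gt0; exact: rmin_gt0.
have : \forall m \near \oo, rmax ^+ m < rmin r ^+ n.
  have h1 : `|rmax| < 1 by rewrite ger0_norm ?rmax_ge0 ?rmax_lt1.
  have := @cvgr_lt _ _ _ _ _ _ (cvg_expr h1) _ hpos.
  move=> h; exact: h.
case=> L _ HL.
apply: (sub_finite_set _ (words_fin N L)).
move=> w [k kn]; case: k kn => [|k] kn /=.
  by move=> ->.
case=> wn [_ hlt].
rewrite leqNgt; apply/negP => Lw.
have : rmin r ^+ n < rmax ^+ (size w).-1.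
  apply: le_lt_trans (lt_le_trans hlt _).
    apply: ler_wiXn2l => //; [exact: ltW rmin_gt0 | exact: rmin_le1].
  apply: le_trans (rw_le_rmax _) _. by rewrite size_takel ?leq_pred.
have hL : (L <= (size w).-1)%N.
  by rewrite -ltnS prednK // (leq_ltn_trans (leq0n L) Lw).
move=> h2; have h1 := HL _ hL; move: (lt_trans h2 h1); by rewrite ltxx.
Qed.


Lemma fsum_ler (T : choiceType) (A : set T) (F G : T -> R) :
  finite_set A -> (forall x, A x -> F x <= G x) ->
  \sum_(x \in A) F x <= \sum_(x \in A) G x.
Proof.
move=> fA FG; rewrite !fsbig_finite //; rewrite !big_seq; apply: ler_sum => x.
by rewrite in_fset_set // inE => /FG.
Qed.

Lemma fsum_ge0 (T : choiceType) (A : set T) (F : T -> R) :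
  finite_set A -> (forall x, 0 <= F x) -> 0 <= \sum_(x \in A) F x.
Proof. by move=> fA F0; rewrite fsbig_finite //; apply: sumr_ge0. Qed.

Lemma fsum_le (T : choiceType) (A B : set T) (F : T -> R) :
  finite_set B -> A `<=` B -> (forall x, 0 <= F x) ->
  \sum_(x \in A) F x <= \sum_(x \in B) F x.
Proof.
move=> fB AB F0; have fA := sub_finite_set AB fB.
rewrite -(setDUK AB) fsbigU0 //; first by rewrite lerDl; apply: fsum_ge0 => //; exact: finite_setD.
- exact: finite_setD.
- by move=> x [Ax []].
Qed.

Local Notation cd := (conductance S r K alpha gamma lambda).
Local Notation en := (energy S r K alpha gamma lambda).

Lemma cd_ge0 x y : 0 <= cd x y.
Proof.
rewrite /conductance; case: ifP => _.
  by apply: mulr_ge0; [exact: powR_ge0 | rewrite invr_ge0; apply: exprn_ge0; exact: ltW].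
case: ifP => _.
  by apply: mulr_ge0; [exact: powR_ge0 | rewrite invr_ge0; apply: exprn_ge0; exact: ltW].
case: ifP => _ //.
apply: mulr_ge0; [apply: exprn_ge0; exact: powR_ge0 | rewrite invr_ge0; apply: exprn_ge0; exact: ltW].
Qed.

Lemma term_ge0 (f : word N -> R) x y : 0 <= cd x y * (f x - f y) ^+ 2.
Proof. by apply: mulr_ge0; [exact: cd_ge0 | exact: sqr_ge0]. Qed.

Lemma energyE n f : en n f = 2^-1 * \sum_(x <- finmap.enum_fset (fset_set (Xn r n))) \sum_(y <- finmap.enum_fset (fset_set (Xn r n)))
   cd x y * (f x - f y) ^+ 2.
Proof.
rewrite /energy fsbig_finite; last exact: Xn_fin.
congr (_ * _); apply: eq_bigr => x _; rewrite fsbig_finite //; exact: Xn_fin.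
Qed.

Lemma en_ge0 n f : 0 <= en n f.
Proof.
rewrite energyE; apply: mulr_ge0 => //; apply: sumr_ge0 => x _; apply: sumr_ge0 => y _.
exact: term_ge0.
Qed.

Lemma en_dom2 n g f1 f2 :
  (forall x y, (g x - g y) ^+ 2 <= (f1 x - f1 y) ^+ 2 + (f2 x - f2 y) ^+ 2) ->
  en n g <= en n f1 + en n f2.
Proof.
move=> H; rewrite !energyE -mulrDr; apply: ler_wpM2l => //.
rewrite -big_split /=; apply: ler_sum => x _; rewrite -big_split /=; apply: ler_sum => y _.
by rewrite -mulrDr; apply: ler_wpM2l; [exact: cd_ge0 | exact: H].
Qed.

Lemma en_domk n g f k : 0 <= k ->
  (forall x y, (g x - g y) ^+ 2 <= k * (f x - f y) ^+ 2) ->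
  en n g <= k * en n f.
Proof.
move=> k0 H; rewrite !energyE [k * _]mulrCA; apply: ler_wpM2l => //.
rewrite mulr_sumr; apply: ler_sum => x _; rewrite mulr_sumr; apply: ler_sum => y _.
by rewrite [k * _]mulrCA; apply: ler_wpM2l; [exact: cd_ge0 | exact: H].
Qed.

Lemma Xn_mono n : Xn r n `<=` Xn r n.+1.
Proof. by move=> w [k kn Hk]; exists k => //; exact: leqW. Qed.

Lemma en_mono n f : en n f <= en n.+1 f.
Proof.
rewrite /energy; apply: ler_wpM2l => //.
apply: (@le_trans _ _ (\sum_(x \in Xn r n) \sum_(y \in Xn r n.+1) cd x y * (f x - f y) ^+ 2)).
  apply: fsum_ler; first exact: Xn_fin.
  move=> x _; apply: fsum_le; [exact: Xn_fin | exact: Xn_mono | exact: term_ge0].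
apply: fsum_le; [exact: Xn_fin | exact: Xn_mono |].
by move=> x; apply: fsum_ge0; [exact: Xn_fin | exact: term_ge0].
Qed.

Lemma en_term n f x y : Xn r n x -> Xn r n y ->
  cd x y * (f x - f y) ^+ 2 <= 2 * en n f.
Proof.
move=> hx hy; rewrite /energy; set SS := (X in 2^-1 * X).
rewrite [X in _ <= X]mulrA mulfV ?mul1r // /SS.
apply: (@le_trans _ _ (\sum_(w \in [set y]) cd x w * (f x - f w)^+2)); first by rewrite fsbig_set1.
apply: (@le_trans _ _ (\sum_(w \in Xn r n) cd x w * (f x - f w)^+2)).
  apply: fsum_le; [exact: Xn_fin | by move=> w -> | exact: term_ge0].
apply: (@le_trans _ _ (\sum_(z \in [set x]) \sum_(w \in Xn r n) cd z w * (f z - f w)^+2)).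
  by rewrite fsbig_set1.
apply: fsum_le; [exact: Xn_fin | by move=> w -> |].
by move=> z; apply: fsum_ge0; [exact: Xn_fin | exact: term_ge0].
Qed.


Definition adm (P Q : set (word N)) : set (word N -> R) :=
  [set f : word N -> R | (forall x, P x -> f x = 1) /\ (forall x, Q x -> f x = 0)].
Definition Mres n (P Q : set (word N)) : R := inf [set en n f | f in adm P Q].

Lemma eff_resE n P Q : ~ (P `&` Q !=set0) ->
  eff_res S r K alpha gamma lambda n P Q = (Mres n P Q)^-1.
Proof. by move=> h; rewrite /eff_res asboolF. Qed.

Lemma eff_res_meet n P Q : P `&` Q !=set0 -> eff_res S r K alpha gamma lambda n P Q = 0.
Proof. by move=> h; rewrite /eff_res asboolT. Qed.

Lemma adm_ne P Q : ~ (P `&` Q !=set0) -> adm P Q !=set0.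
Proof.
move=> h; exists (fun x => if `[< P x >] then 1 else 0); split => x Hx.
  by rewrite asboolT.
rewrite asboolF // => Px; apply: h; by exists x.
Qed.

Lemma Mres_hasinf n P Q : ~ (P `&` Q !=set0) -> has_inf [set en n f | f in adm P Q].
Proof.
move=> h; split.
  by case: (adm_ne h) => f hf; exists (en n f), f.
by exists 0 => _ [f _ <-]; exact: en_ge0.
Qed.

Lemma Mres_le n P Q f : adm P Q f -> Mres n P Q <= en n f.
Proof.
move=> hf; apply: ge_inf; last by exists f.
by exists 0 => _ [g _ <-]; exact: en_ge0.
Qed.

Lemma Mres_ge0 n P Q : ~ (P `&` Q !=set0) -> 0 <= Mres n P Q.
Proof.
move=> h; apply: lb_le_inf; first by case: (Mres_hasinf n h).
by move=> _ [g _ <-]; exact: en_ge0.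
Qed.

Lemma Mres_adh n P Q e : ~ (P `&` Q !=set0) -> 0 < e ->
  exists2 f, adm P Q f & en n f < Mres n P Q + e.
Proof.
move=> h e0; have [_ [f hf <-] hlt] := inf_adherent e0 (Mres_hasinf n h).
by exists f.
Qed.

Lemma Mres_mono n P Q P' Q' : P `<=` P' -> Q `<=` Q' -> ~ (P' `&` Q' !=set0) ->
  Mres n P Q <= Mres n P' Q'.
Proof.
move=> PP QQ h; apply: lb_le_inf; first by case: (Mres_hasinf n h).
move=> _ [g [g1 g0] <-]; apply: Mres_le; split => x Hx.
  exact/g1/PP.
exact/g0/QQ.
Qed.

Lemma Mres_union n P Q1 Q2 : ~ (P `&` Q1 !=set0) -> ~ (P `&` Q2 !=set0) ->
  Mres n P (Q1 `|` Q2) <= Mres n P Q1 + Mres n P Q2.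
Proof.
move=> h1 h2; apply/ler_addgt0Pr => e e0.
have e20 : 0 < e / 2 by rewrite divr_gt0.
have [f1 [f11 f10] hf1] := Mres_adh n h1 e20.
have [f2 [f21 f20] hf2] := Mres_adh n h2 e20.
pose g x := Num.max 0 (Num.min (f1 x) (f2 x)).
have hg : adm P (Q1 `|` Q2) g.
  split => x Hx.
    by rewrite /g f11 // f21 // minxx; apply/max_idPr.
  case: Hx => Hx; rewrite /g; apply/max_idPl.
    by rewrite f10 // ge_min lexx.
  by rewrite f20 // ge_min lexx orbT.
apply: le_trans (Mres_le n hg) _.
apply: le_trans (en_dom2 n (f1:=f1) (f2:=f2) _) _.
  move=> x y; rewrite /g; apply: le_trans (sq_max0 _ _) _; exact: sq_min.
have -> : Mres n P Q1 + Mres n P Q2 + e = (Mres n P Q1 + e/2) + (Mres n P Q2 + e/2).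
  by field.
by apply: lerD; apply: ltW.
Qed.


Lemma key n (A B A' B' : set (word N)) (c0 E0 del : R) f :
  0 < c0 -> 0 <= del -> del <= 1/4 -> 2 * E0 <= c0 * del ^+ 2 ->
  (forall a, A a -> exists2 a', A' a' & [/\ Xn r n.+1 a', Xn r n.+1 a & c0 <= cd a' a]) ->
  (forall b, B b -> exists2 b', B' b' & [/\ Xn r n.+1 b', Xn r n.+1 b & c0 <= cd b' b]) ->
  adm A' B' f -> en n.+1 f <= E0 ->
  Mres n A B * (1 - 2 * del) ^+ 2 <= en n.+1 f.
Proof.
move=> c00 d0 d14 hE hA hB [f1 f0] hf.
have close : forall x x', Xn r n.+1 x' -> Xn r n.+1 x -> c0 <= cd x' x ->
    (f x' - f x) ^+ 2 <= del ^+ 2.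
  move=> x x' hx' hx hc.
  have h1 := en_term f hx' hx.
  have h2 : c0 * (f x' - f x) ^+ 2 <= cd x' x * (f x' - f x) ^+ 2.
    by apply: ler_wpM2r => //; exact: sqr_ge0.
  have h3 : c0 * (f x' - f x) ^+ 2 <= c0 * del ^+ 2.
    apply: le_trans h2 _; apply: le_trans h1 _; apply: le_trans hE.
    by rewrite ler_pM2l.
  by rewrite ler_pM2l in h3.
have gA : forall a, A a -> 1 - del <= f a.
  move=> a Aa; have [a' A'a' [h1 h2 h3]] := hA a Aa.
  have := close _ _ h1 h2 h3; rewrite f1 //; nra.
have gB : forall b, B b -> f b <= del.
  move=> b Bb; have [b' B'b' [h1 h2 h3]] := hB b Bb.
  have := close _ _ h1 h2 h3; rewrite f0 //; nra.
have dpos : 0 < 1 - 2 * del by lra.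
pose t x := (f x - del) / (1 - 2 * del).
pose g x := Num.min 1 (Num.max 0 (t x)).
have hg : adm A B g.
  split => x Hx; rewrite /g /t.
    have ht : 1 <= (f x - del) / (1 - 2 * del).
      by rewrite ler_pdivlMr //; have := gA x Hx; lra.
    have -> : Num.max 0 ((f x - del) / (1 - 2 * del)) = (f x - del) / (1 - 2 * del).
      by apply/max_idPr; apply: le_trans ht.
    exact/min_idPl.
  have ht : (f x - del) / (1 - 2 * del) <= 0.
    by rewrite ler_pdivrMr // mul0r; have := gB x Hx; lra.
  have -> : Num.max 0 ((f x - del) / (1 - 2 * del)) = 0 by apply/max_idPl.
  by apply/min_idPr.
have k0 : 0 <= ((1 - 2 * del) ^+ 2)^-1 by rewrite invr_ge0 sqr_ge0.
have h1 : en n g <= ((1 - 2 * del) ^+ 2)^-1 * en n f.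
  apply: en_domk => // x y; rewrite /g.
  apply: le_trans (sq_min1 _ _) _; apply: le_trans (sq_max0 _ _) _.
  rewrite /t -mulrBl exprMn exprVn mulrC; apply: ler_wpM2l => //; have -> : f x - del - (f y - del) = f x - f y by ring. by [].
have h2 := Mres_le n hg.
have h3 := en_mono n f.
have dd : 0 < (1 - 2 * del) ^+ 2 by rewrite exprn_gt0.
rewrite -ler_pdivlMr // mulrC.
apply: le_trans h2 (le_trans h1 _).
by apply: ler_wpM2l.
Qed.


Lemma rw_take_ge w : w <> [::] -> rmin r * rw r (take (size w).-1 w) <= rw r w.
Proof.
case/lastP: w => [//|w i] _.
rewrite size_rcons /= -cats1 take_size_cat // /rw big_cat big_cons big_nil /= mulr1 mulrC.
apply: ler_wpM2l; [exact: rw_ge0 | exact: rmin_le].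
Qed.

Lemma inJ_gt n w : inJ r n.+1 w -> rmin r ^+ n.+2 < rw r w.
Proof.
move=> [wn [_ hlt]]; apply: lt_le_trans (rw_take_ge wn).
by rewrite exprS ltr_pM2l //; exact: rmin_gt0.
Qed.

Lemma inJ_uniq m k w : inJ r m w -> inJ r k w -> m = k.
Proof.
have gen : forall m k, (m < k)%N -> inJ r m w -> inJ r k w -> False.
  move=> {}m {}k mk; case: m mk => [|m] mk.
    case: k mk => // k _ -> [].
    by [].
  case: k mk => // k mk hm [_ [hk _]].
  have h1 := inJ_gt hm.
  have : rmin r ^+ k.+1 <= rmin r ^+ m.+2.
    apply: ler_wiXn2l => //; [exact: ltW rmin_gt0 | exact: rmin_le1].
  move=> h2; have := lt_le_trans h1 (le_trans hk h2); by rewrite ltxx.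
move=> hm hk; case: (ltngtP m k) => // mk.
  by case: (gen _ _ mk hm hk).
by case: (gen _ _ mk hk hm).
Qed.

Lemma level_eq n w : inJ r n w -> level r w = n.
Proof.
move=> h; rewrite /level; apply: (@inJ_uniq _ _ w) => //.
by apply: (xgetPex 0%N (P := [set m | inJ r m w])); exists n.
Qed.

Lemma powR_exprn (a : R) k : 0 <= a -> (a `^ alpha) ^+ k = (a ^+ k) `^ alpha.
Proof.
move=> a0; rewrite -powR_mulrn ?powR_ge0 // -powRrM mulrC powRrM powR_mulrn //.
Qed.

Lemma parent_cd n x' x : inJ r n.+1 x' -> inJ r n x -> prefix x x' ->
  (rmin r `^ alpha) ^+ n.+2 / lambda ^+ n.+1 <= cd x' x.
Proof.
move=> h1 h0 hp.
have hpar : is_parent r x x' by exists n.+1.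
rewrite /conductance asboolT // (level_eq h1).
apply: ler_wpM2r; first by rewrite invr_ge0 exprn_ge0 // ltW.
rewrite powR_exprn; last exact: ltW rmin_gt0.
apply: ge0_ler_powR => //.
- by rewrite nnegrE exprn_ge0 // ltW // rmin_gt0.
- by rewrite nnegrE rw_ge0.
- exact: ltW (inJ_gt h1).
Qed.


Lemma Mres_bigU n P (T : choiceType) (s : seq T) (Q : T -> set (word N)) :
  (forall b, b \in s -> ~ (P `&` Q b !=set0)) ->
  Mres n P (\bigcup_(b in [set` s]) Q b) <= \sum_(b <- s) Mres n P (Q b).
Proof.
elim: s => [|b s IH] H.
  rewrite big_nil.
  have hadm : adm P (\bigcup_(b in [set` [::]]) Q b) (fun _ => 1).
    by split => // x [c].
  apply: le_trans (Mres_le n hadm) _.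
  have := @en_domk n (fun _ : word N => 1 : R) (fun _ : word N => 1 : R) 0 (lexx 0).
  move=> h; apply: le_trans (h _) _; last by rewrite mul0r.
  by move=> x y; rewrite subrr expr2 !mul0r.
rewrite big_cons.
have -> : \bigcup_(c in [set` b :: s]) Q c = Q b `|` \bigcup_(c in [set` s]) Q c.
  apply/seteqP; split => x.
    move=> [c]; rewrite /= inE => /orP[/eqP -> | cs] Qx; first by left.
    by right; exists c.
  case=> [Qx | [c cs Qx]]; first by exists b => //=; rewrite inE eqxx.
  by exists c => //=; rewrite inE cs orbT.
have Hs : forall c, c \in s -> ~ (P `&` Q c !=set0).
  by move=> c cs; apply: H; rewrite inE cs orbT.
apply: le_trans (Mres_union _ _ _) _.
- by apply: H; rewrite inE eqxx.
- move=> [x [Px [c cs Qx]]]; apply: (Hs c cs); by exists x.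
by apply: lerD => //; exact: IH.
Qed.


Lemma main_sec (kappa : nat -> 'rV[R]_d -> word N) (E : set 'rV[R]_d) :
  lambda < rmin r `^ alpha -> kappa_seq S r K kappa -> finite_set E -> E `<=` K ->
  (exists xi eta, [/\ E xi, E eta & xi <> eta]) ->
  (forall xi eta, E xi -> E eta -> xi <> eta ->
     0 < lim_res S r K alpha gamma lambda kappa [set xi] [set eta]) ->
  forall xi, E xi -> 0 < lim_res S r K alpha gamma lambda kappa [set xi] (E `\ xi).
Proof.
move=> hlamr hkap hEfin hEK [xi0 [eta0 [hxi0 heta0 hne0]]] hpair xi hxi.
set B := E `\ xi.
have hBfin : finite_set B by exact: finite_setD.
set sB := finmap.enum_fset (fset_set B).
have inB : forall b, b \in sB <-> B b.
  move=> b; have := in_fset_set hBfin b; rewrite /sB => ->; by rewrite in_setE.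
have [b0 hb0] : exists b0, B b0.
  case: (pselect (xi0 = xi)) => h.
    by exists eta0; split => //= hh; apply: hne0; rewrite h hh.
  by exists xi0; split.
pose p b n := eff_res S r K alpha gamma lambda n (kappa n @` [set xi]) (kappa n @` [set b]).
have hpL : forall b, B b -> 0 < limn (p b).
  move=> b [hb hbx]; apply: hpair => // hh; apply: hbx; by rewrite hh.
have hpc : forall b, B b -> cvgn (p b).
  move=> b hb; apply: contrapT => hc; have := hpL b hb; by rewrite limn_dvg // ltxx.
pose L b := limn (p b).
have hev1 : exists N1, forall n, (N1 <= n)%N -> forall b, b \in sB -> L b / 2 < p b n < 2 * L b.
  apply: ev_seq => b /inB hb.
  have hL := hpL b hb.
  have h1 : L b / 2 < L b by rewrite /L; lra.
  have h2 : L b < 2 * L b by rewrite /L; lra.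
  have [N1 H1] := ev_nat (cvgr_gt _ (hpc b hb) _ h1).
  have [N2 H2] := ev_nat (cvgr_lt _ (hpc b hb) _ h2).
  exists (maxn N1 N2) => n hn; apply/andP; split.
    apply: H1; apply: leq_trans hn; exact: leq_maxl.
  apply: H2; apply: leq_trans hn; exact: leq_maxr.
have [N1 HN1] := hev1.
have hLpos : forall b, B b -> 0 < L b by move=> b hb; exact: hpL.
pose rho := rmin r `^ alpha.
have rho0 : 0 < rho by apply: powR_gt0; exact: rmin_gt0.
pose q := lambda / rho.
have q0 : 0 < q by rewrite divr_gt0.
have q1 : q < 1 by rewrite ltr_pdivrMr // mul1r.
pose sg := Num.sqrt q.
have sg0 : 0 <= sg by exact: sqrtr_ge0.
have sg1 : sg < 1 by rewrite /sg -sqrtr1 ltr_sqrt.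
have sgq : sg ^+ 2 = q by rewrite sqr_sqrtr // ltW.
pose C' := \sum_(b <- sB) 2 / L b.
have C'0 : 0 <= C'.
  rewrite /C' big_seq; apply: sumr_ge0 => b /inB hb.
  by apply: divr_ge0 => //; apply: ltW; exact: hLpos.
pose E0 := 2 * C'.
pose Dd := Num.sqrt (2 * E0 / rho).
have Dd0 : 0 <= Dd by exact: sqrtr_ge0.
have DdE : Dd ^+ 2 = 2 * E0 / rho.
  by rewrite sqr_sqrtr // divr_ge0 // ?mulr_ge0 // ltW.
pose del n := Dd * sg ^+ n.+1.
pose c0 n := rho ^+ n.+2 / lambda ^+ n.+1.
have c00 : forall n, 0 < c0 n.
  by move=> n; rewrite /c0 divr_gt0 // exprn_gt0.
have hdelE : forall n, 2 * E0 <= c0 n * del n ^+ 2.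
  move=> n; rewrite /del /c0 exprMn DdE -exprM mulnC exprM sgq /q expr_div_n.
  have hr0 : rho != 0 by rewrite gt_eqF.
  have hl0 : lambda != 0 by rewrite gt_eqF.
  have hrn : rho ^+ n.+1 != 0 by rewrite expf_neq0.
  have hln : lambda ^+ n.+1 != 0 by rewrite expf_neq0.
  rewrite le_eqVlt; apply/orP; left; apply/eqP. rewrite [rho ^+ n.+2]exprS. field. by rewrite hr0 hrn hln.
have delS : forall n, del n = Dd * sg * sg ^+ n by move=> n; rewrite /del exprS mulrA.
have hdel0 : forall n, 0 <= del n by move=> n; rewrite /del mulr_ge0 // exprn_ge0.
have [N2 HN2] : exists N2, forall n, (N2 <= n)%N -> del n <= 1/4.
  have hc : (fun n => Dd * sg * sg ^+ n) @ \oo --> Dd * sg * 0.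
    apply: cvgMl_tmp; apply: cvg_expr; by rewrite ger0_norm.
  have h14 : Dd * sg * 0 < 1/4 by rewrite mulr0.
  have [N2 H2] := ev_nat (cvgr_lt _ hc _ h14).
  by exists N2 => n hn; rewrite delS; apply: ltW; apply: H2.
pose N0 := maxn N1 N2.
pose a n := kappa n xi.
pose Bn n := kappa n @` B.
pose M n := Mres n [set a n] (Bn n).
pose u n := eff_res S r K alpha gamma lambda n (kappa n @` [set xi]) (kappa n @` B).
have F1 : forall n, (N1 <= n)%N -> forall b, B b ->
    ~ ([set a n] `&` [set kappa n b] !=set0) /\ Mres n [set a n] [set kappa n b] = (p b n)^-1.
  move=> n hn b hb.
  have /andP[hp1 hp2] := HN1 n hn b (proj2 (inB b) hb).
  have pb0 : 0 < p b n by apply: lt_trans hp1; rewrite divr_gt0 // hLpos.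
  have hdis : ~ ([set a n] `&` [set kappa n b] !=set0).
    move=> hm; move: pb0; rewrite /p !image_set1 eff_res_meet //; by rewrite ltxx.
  split => //; rewrite /p !image_set1 eff_resE // invrK //.
have F2 : forall n, (N1 <= n)%N -> ~ ([set a n] `&` Bn n !=set0).
  move=> n hn [w [hw [b hb hbw]]]; have [h _] := F1 n hn b hb.
  by apply: h; exists w; split => //; rewrite -hbw.
have F3 : forall n, (N1 <= n)%N -> M n <= C'.
  move=> n hn; rewrite /M.
  have -> : Bn n = \bigcup_(b in [set` sB]) [set kappa n b].
    apply/seteqP; split => w.
      by move=> [b hb <-]; exists b => //=; apply/inB.
    by move=> [b /= /inB hb ->]; exists b.
  apply: le_trans (@Mres_bigU n ([set a n]) _ sB (fun b => [set kappa n b]) _) _.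
    by move=> b /inB hb; exact: (F1 n hn b hb).1.
  rewrite /C' !big_seq; apply: ler_sum => b hbs.
  have hb := proj1 (inB b) hbs.
  rewrite (F1 n hn b hb).2.
  have /andP[hp1 _] := HN1 n hn b hbs.
  have hL := hLpos b hb.
  have -> : 2 / L b = (L b / 2)^-1 by rewrite invf_div.
  have hL2 : 0 < L b / 2 by rewrite divr_gt0.
  rewrite lef_pV2 ?posrE ?ltW //; exact: lt_trans hp1.
have F4 : forall n, (N1 <= n)%N -> (p b0 n)^-1 <= M n.
  move=> n hn; rewrite -(F1 n hn b0 hb0).2 /M; apply: Mres_mono => //.
    by move=> w ->; exists b0.
  exact: F2.
have F5 : forall n, (N1 <= n)%N -> u n = (M n)^-1.
  by move=> n hn; rewrite /u image_set1 eff_resE //; exact: F2.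
have hb0s : b0 \in sB by apply/inB.
have G : forall n, (N1 <= n)%N -> [/\ 0 < M n, 0 < C', u n <= 2 * L b0 & C'^-1 <= u n].
  move=> n hn; have /andP[hp1 hp2] := HN1 n hn b0 hb0s.
  have hL := hLpos b0 hb0.
  have pb0 : 0 < p b0 n by apply: lt_trans hp1; rewrite divr_gt0.
  have hM : 0 < M n by apply: lt_le_trans (F4 n hn); rewrite invr_gt0.
  have hC : 0 < C' by apply: lt_le_trans (F3 n hn).
  split => //.
    rewrite F5 //; apply: le_trans (ltW hp2); rewrite -[p b0 n]invrK lef_pV2 ?posrE ?invr_gt0 //.
    exact: F4.
  by rewrite F5 // lef_pV2 ?posrE //; exact: F3.
have hU : 0 <= 2 * L b0 by rewrite mulr_ge0 // ltW // hLpos.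
have K1 : forall n, (N0 <= n)%N -> M n * (1 - 2 * del n) ^+ 2 <= M n.+1.
  move=> n hn.
  have hn1 : (N1 <= n)%N by apply: leq_trans hn; exact: leq_maxl.
  have hn2 : (N2 <= n)%N by apply: leq_trans hn; exact: leq_maxr.
  have hn1' : (N1 <= n.+1)%N by exact: leqW.
  have [hM1 hC _ _] := G n.+1 hn1'.
  apply/ler_addgt0Pr => e e0.
  pose e' := Num.min e C'.
  have e'0 : 0 < e' by rewrite lt_min e0 hC.
  have [f hadm hf] := Mres_adh (n.+1) (F2 n.+1 hn1') e'0.
  have hfE : en n.+1 f <= E0.
    apply: ltW; apply: lt_le_trans hf _; rewrite /E0.
    have : e' <= C' by rewrite ge_min lexx orbT.
    have := F3 n.+1 hn1'; lra.
  have hK := hkap xi (hEK _ hxi).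
  have witness : forall x, K x -> [/\ Xn r n.+1 (kappa n.+1 x), Xn r n.+1 (kappa n x) & c0 n <= cd (kappa n.+1 x) (kappa n x)].
    move=> x hx; have [h0 hpre _] := hkap x hx n; have [h1 _ _] := hkap x hx n.+1.
    split; [by exists n.+1 | by exists n => //; exact: leqnSn |].
    exact: parent_cd.
  have wA : forall w, [set a n] w -> exists2 w', [set a n.+1] w' &
      [/\ Xn r n.+1 w', Xn r n.+1 w & c0 n <= cd w' w].
    move=> w ->; exists (a n.+1) => //; exact: witness (hEK _ hxi).
  have wB : forall w, Bn n w -> exists2 w', Bn n.+1 w' &
      [/\ Xn r n.+1 w', Xn r n.+1 w & c0 n <= cd w' w].
    move=> w [b hb <-]; exists (kappa n.+1 b); first by exists b.
    by apply: witness; apply: hEK; case: hb.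
  have h := @key n [set a n] (Bn n) [set a n.+1] (Bn n.+1) (c0 n) E0 (del n) f (c00 n) (hdel0 n) (HN2 n hn2) (hdelE n) wA wB hadm hfE.
  apply: le_trans h _; apply: le_trans (ltW hf) _; apply: lerD => //.
  by rewrite ge_min lexx.
have K2 : forall n, (N0 <= n)%N -> 0 <= u n /\ u n.+1 <= u n + (4 * (2 * L b0) * (Dd * sg)) * sg ^+ n.
  move=> n hn.
  have hn1 : (N1 <= n)%N by apply: leq_trans hn; exact: leq_maxl.
  have hn2 : (N2 <= n)%N by apply: leq_trans hn; exact: leq_maxr.
  have hn1' : (N1 <= n.+1)%N by exact: leqW.
  have [hM hC hu1 hu2] := G n hn1.
  have [hM' _ hu1' hu2'] := G n.+1 hn1'.
  have hu0 : 0 < u n by apply: lt_le_trans hu2; rewrite invr_gt0.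
  split; first exact: ltW.
  have hk := K1 n hn.
  have hd0 := hdel0 n; have hd1 := HN2 n hn2.
  rewrite -[_ * _ * sg ^+ n]mulrA -delS.
  move: hu1' hu2' hd0 hd1 hk; set x := u n.+1; set y := u n; set dl := del n.
  move=> hu1' hu2' hd0 hd1 hk.
  have ex : x * M n.+1 = 1 by rewrite /x F5 // mulVf // gt_eqF.
  have ey : y * M n = 1 by rewrite /y F5 // mulVf // gt_eqF.
  have x0 : 0 <= x by apply: le_trans hu2'; rewrite invr_ge0 ltW.
  have hxy : x * (1 - 2 * dl) ^+ 2 <= y.
    have hxy0 : 0 <= x * y by rewrite mulr_ge0 // ltW.
    have := ler_wpM2l hxy0 hk.
    have -> : x * y * (M n * (1 - 2 * dl) ^+ 2) = x * (1 - 2 * dl) ^+ 2 * (y * M n) by ring.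
    have -> : x * y * M n.+1 = y * (x * M n.+1) by ring.
    by rewrite ex ey !mulr1.
  have e1 : x = x * (1 - 2 * dl) ^+ 2 + x * (4 * dl - 4 * dl ^+ 2) by ring.
  have e2 : x * (4 * dl - 4 * dl ^+ 2) <= x * (4 * dl).
    apply: ler_wpM2l => //; have := sqr_ge0 dl; lra.
  have e3 : x * (4 * dl) <= 2 * L b0 * (4 * dl).
    apply: ler_wpM2r => //; lra.
  rewrite e1; lra.
have hA : 0 <= 4 * (2 * L b0) * (Dd * sg) by apply: mulr_ge0; [apply: mulr_ge0 => //; lra | exact: mulr_ge0].
have hcv : cvgn u := @quasi_cvg R u (4 * (2 * L b0) * (Dd * sg)) sg N0 hA sg0 sg1 K2.
have [_ hC _ _] := G N1 (leqnn _).
have hCi : 0 < C'^-1 by rewrite invr_gt0.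
rewrite /lim_res; apply: lt_le_trans hCi _.
apply: limr_ge; first exact: hcv.
by exists N1 => // n /= hn; case: (G n hn).
Qed.

End Main.

Theorem lemma4p8 (R : realType) (d N : nat)
    (S : 'I_N -> 'rV[R]_d -> 'rV[R]_d) (r : 'I_N -> R) (K : set 'rV[R]_d)
    (alpha gamma lambda : R) (kappa : nat -> 'rV[R]_d -> word N)
    (E : set 'rV[R]_d) :
  (2 <= N)%N ->
  (forall i, 0 < r i < 1) ->
  (forall i x y, eucl_dist (S i x) (S i y) = r i * eucl_dist x y) ->
  OSC S ->
  compact K -> K !=set0 -> K = \bigcup_(i in setT) (S i @` K) ->
  hausdorff_dim K = alpha%:E ->
  0 < gamma ->
  0 < lambda < rmin r `^ alpha ->
  kappa_seq S r K kappa ->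
  finite_set E -> E `<=` K ->
  (exists xi eta, [/\ E xi, E eta & xi <> eta]) ->
  (forall xi eta, E xi -> E eta -> xi <> eta ->
     0 < lim_res S r K alpha gamma lambda kappa [set xi] [set eta]) ->
  forall xi, E xi ->
     0 < lim_res S r K alpha gamma lambda kappa [set xi] (E `\ xi).
Proof.
move=> hN hr hsim hosc hK hKne hKeq hdim hgam /andP[hl0 hlr] hkap hEfin hEK hex hpair xi hxi.
have halpha : 0 <= alpha.
  have : (0%:E <= hausdorff_dim K)%E.
    apply: le_ereal_inf_tmp => _ [s [s0 _] <-]; by rewrite lee_fin.
  by rewrite hdim lee_fin.
exact: (main_sec hr hl0 halpha hlr hkap hEfin hEK hex hpair hxi).
Qed.
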